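(* Let $N\ge 2$, $n\ge 1$, and let $\mathbf{P}_1,\dots,\mathbf{P}_N\in\mathbb{R}^n$ satisfy $\sum_{i=1}^N\mathbf{P}_i=0$. Let $(Y_1,\dots,Y_N)\in[0,\infty)^N$ with not all $Y_i$ equal to zero. Consider the system for unknowns $\mathbf{V}_1,\dots,\mathbf{V}_N\in\mathbb{R}^n$: $$\sum_{i=1}^N Y_i\mathbf{V}_i=0,\qquad \sum_{j=1}^N B_{ij}(\mathbf{Y})\mathbf{V}_j=\mathbf{P}_i\quad(1\le i\le N),\tag{S1}$$ and the system for unknowns $\mathbf{F}_1,\dots,\mathbf{F}_N\in\mathbb{R}^n$: $$\sum_{i=1}^N\mathbf{F}_i=0,\qquad \Big(\sum_{k\ne i}d'_{ik}Y_k\Big)\mathbf{F}_i-Y_i\sum_{j\ne i}d'_{ij}\mathbf{F}_j=\mathbf{P}_i\quad(1\le i\le N).\tag{S2}$$ Then: (i) If $Y_i>0$ for all $i$, the system (S1) (which consists of $N+1$ vector equations) is consistent and determines $\mathbf{V}_1,\dots,\mathbf{V}_N$ uniquely, and (S2) determines $\mathbf{F}_i=Y_i\mathbf{V}_i$ uniquely. Moreover $\mathbf{V}=(\mathbf{V}_1,\dots,\mathbf{V}_N)$ is the unique solution of $\sum_{j}C_{ij}(\mathbf{Y})\mathbf{V}_j=\mathbf{P}_i$, $1\le i\le N$, where $C(\mathbf{Y})$ is symmetric positive definite. (ii) If, after relabeling, $Y_1,\dots,Y_k>0$ and $Y_{k+1}=\dots=Y_N=0$ for some $1\le k<N$, then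 in (S1) the vectors $\mathbf{V}_1,\dots,\mathbf{V}_k$ are uniquely determined while $\mathbf{V}_{k+1},\dots,\mathbf{V}_N$ are undetermined (when solutions exist); nevertheless all $\mathbf{F}_i$ are uniquely determined by (S2): for $i=k+1,\dots,N$, $\mathbf{F}_i=\mathbf{P}_i/S_i$ with $S_i=\sum_{j=1}^k d'_{ij}Y_j$, and $\mathbf{F}_1,\dots,\mathbf{F}_k$ are the unique solution of the $k\times k$ (vector) system $$\Big(\sum_{j\le k, j\ne i}d'_{ij}Y_j+\gamma Y_i\Big)\mathbf{F}_i-Y_i\sum_{j\le k,j\ne i}(d'_{ij}-\gamma)\mathbf{F}_j=\mathbf{P}_i+Y_i\sum_{j=k+1}^N(d'_{ij}-\gamma)\mathbf{F}_j,\quad 1\le i\le k.$$ In particular $\mathbf{F}_{k+1}=\dots=\mathbf{F}_N=0$ if $\mathbf{P}_{k+1}=\dots=\mathbf{P}_N=0$. (iii) In all cases, the linear system $$\Big(\sum_{j\ne i}d'_{ij}Y_j+\gamma Y_i\Big)\mathbf{F}_i-Y_i\sum_{j\ne i}(d'_{ij}-\gamma)\mathbf{F}_j=\mathbf{P}_i,\quad 1\le i\le N,\tag{S3}$$ has an invertible matrix (for every $\mathbf{P}\in\mathbb{R}^{Nn}$, whether or not $\sum_i\mathbf{P}_i=0$); its solution satisfies $\gamma(\sum_iY_i)(\sum_j\mathbf{F}_j)=\sum_j\mathbf{P}_j$, and when $\sum_i\mathbf{P}_i=0$ the system (S3) is equivalent to (S2), so the $\mathbf{F}_i$ are uniquely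 determined as the solution of (S3).
   Context: Fix molecular masses $M_1,\dots,M_N>0$ and symmetric constants $d_{ij}=d_{ji}>0$ for $i\ne j$ (inverse binary diffusion coefficients). Set $d'_{ij}=d_{ij}/(M_iM_j)$ for $i\neq j$ and $\gamma=\min_{i\ne j}d'_{ij}>0$. For $\mathbf{Y}=(Y_1,\dots,Y_N)$, the $N\times N$ matrix $B(\mathbf{Y})$ is defined by $B_{ij}(\mathbf{Y})=-d'_{ij}Y_iY_j$ for $j\ne i$ and $B_{ii}(\mathbf{Y})=\sum_{k\ne i}d'_{ik}Y_iY_k$, and $C(\mathbf{Y})$ is defined by $C_{ij}(\mathbf{Y})=B_{ij}(\mathbf{Y})+\gamma Y_iY_j$. Matrices act componentwise on $N$-tuples of vectors of $\mathbb{R}^n$. Sums $\sum_{j\ne i}$ range over $j\in\{1,\dots,N\}\setminus\{i\}$ unless otherwise indicated. *)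

(* Defs.v *)
From HB Require Import structures.
From mathcomp Require Import all_boot all_order all_algebra.
Set Implicit Arguments. Unset Strict Implicit. Unset Printing Implicit Defensive.
Import Order.TTheory GRing.Theory Num.Theory.
Local Open Scope ring_scope.

Section Defs.
Variables (R : realFieldType) (N n : nat).
Variables (M : 'I_N -> R) (d : 'I_N -> 'I_N -> R).

Definition dp (i j : 'I_N) : R := d i j / (M i * M j).

(* gamma = min_{i <> j} d'_{ij}; the seed (max of the same family) is
   irrelevant as soon as N >= 2 (the family is nonempty). *)
Definition gam : R :=
  \big[Num.min/ \big[Num.max/0]_(p : 'I_N * 'I_N | p.1 != p.2) dp p.1 p.2]_(p : 'I_N * 'I_N | p.1 != p.2)
     dp p.1 p.2.

Variable Y : 'I_N -> R.

Definition Bm : 'M[R]_N :=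
  \matrix_(i, j) if i == j then \sum_(k | k != i) dp i k * Y i * Y k
                 else - (dp i j * Y i * Y j).

Definition Cm : 'M[R]_N := \matrix_(i, j) (Bm i j + gam * Y i * Y j).

(* Unknowns/data are N-tuples of vectors of R^n, stored as the rows of an
   N x n matrix (row i V = V_i).  Matrices act componentwise: A *m V. *)

Definition S1 (V P : 'M[R]_(N, n)) : Prop :=
  \sum_i Y i *: row i V = 0 /\ Bm *m V = P.

Definition S2 (F P : 'M[R]_(N, n)) : Prop :=
  \sum_i row i F = 0 /\
  forall i, (\sum_(k | k != i) dp i k * Y k) *: row i F
            - Y i *: \sum_(j | j != i) dp i j *: row j F = row i P.

Definition S3 (F P : 'M[R]_(N, n)) : Prop :=
  forall i, (\sum_(j | j != i) dp i j * Y j + gam * Y i) *: row i F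
            - Y i *: \sum_(j | j != i) (dp i j - gam) *: row j F = row i P.

Definition A3 : 'M[R]_N :=
  \matrix_(i, j) if i == j then \sum_(k | k != i) dp i k * Y k + gam * Y i
                 else - (Y i * (dp i j - gam)).

Definition Ssum (i : 'I_N) : R := \sum_(j | 0 < Y j) dp i j * Y j.

(* The reduced k x k system of part (ii), indexed by the set {i | Y_i > 0}
   (so no relabeling is needed); the rows j with Y_j = 0 of G enter as data. *)
Definition Ksys (G P : 'M[R]_(N, n)) : Prop :=
  forall i, 0 < Y i ->
    (\sum_(j | (0 < Y j) && (j != i)) dp i j * Y j + gam * Y i) *: row i G
    - Y i *: \sum_(j | (0 < Y j) && (j != i)) (dp i j - gam) *: row j G
    = row i P + Y i *: \sum_(j | Y j == 0) (dp i j - gam) *: row j G.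

End Defs.

Definition posdef (R : realFieldType) (N : nat) (A : 'M[R]_N) : Prop :=
  A^T = A /\ forall x : 'rV[R]_N, x != 0 -> 0 < (x *m A *m x^T) 0 0.

(* Main.v *)
Require Import Defs.
From HB Require Import structures.
From mathcomp Require Import all_boot all_order all_algebra.
From mathcomp Require Import ring.
Import Order.TTheory GRing.Theory Num.Theory.
Local Open Scope ring_scope.

Section Main.
Variables (R : realFieldType) (N : nat) (M : 'I_N -> R) (d : 'I_N -> 'I_N -> R).
Hypothesis hN : (2 <= N)%N.
Hypothesis hM : forall i, 0 < M i.
Hypothesis hdsym : forall i j, i != j -> d i j = d j i.
Hypothesis hdpos : forall i j, i != j -> 0 < d i j.
Variable Y : 'I_N -> R.
Hypothesis hY0 : forall i, 0 <= Y i.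
Hypothesis hYnz : exists i, Y i != 0.

Local Notation dp := (dp M d).
Local Notation gam := (gam M d).

Lemma dp_sym i j : dp i j = dp j i.
Proof.
case: (eqVneq i j) => [->//|ne]; by rewrite /Defs.dp hdsym // [M j * _]mulrC.
Qed.

Lemma dp_gt0 i j : i != j -> 0 < dp i j.
Proof. by move=> ne; rewrite /Defs.dp divr_gt0 ?mulr_gt0 ?hdpos. Qed.

Lemma gam_gt0 : 0 < gam.
Proof.
have h0 : (0 < N)%N by apply: ltn_trans hN.
pose i0 : 'I_N := Ordinal h0. pose i1 : 'I_N := Ordinal hN.
have ne : i0 != i1 by [].
rewrite /Defs.gam; apply: (big_ind (fun x => 0 < x)).
- have := @le_bigmax_cond _ _ _ 0 (i0, i1) (fun p : 'I_N * 'I_N => p.1 != p.2) (fun p => dp p.1 p.2) ne.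
  move=> h; apply: (lt_le_trans _ h); exact: dp_gt0.
- by move=> x y hx hy; rewrite lt_min hx hy.
- by move=> [i j] /= h; apply: dp_gt0.
Qed.

Lemma Ypos : exists j0, 0 < Y j0.
Proof. by case: hYnz => j hj; exists j; rewrite lt_def hj hY0. Qed.

Lemma sumY_gt0 : 0 < \sum_i Y i.
Proof.
case: Ypos => j0 hj0; rewrite (bigD1 j0) //=.
have h : 0 <= \sum_(i | i != j0) Y i by apply: sumr_ge0 => i _; apply: hY0.
by apply: (lt_le_trans hj0); rewrite lerDl.
Qed.

Definition a2s (x : 'I_N -> R) i :=
  (\sum_k dp i k * Y k) * x i - Y i * \sum_j dp i j * x j.
Definition a3s (x : 'I_N -> R) i := a2s x i + gam * Y i * \sum_j x j.

Lemma a2s_ext x y i : (forall j, x j = y j) -> a2s x i = a2s y i.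
Proof.
move=> h; rewrite /a2s h; congr (_ - _ * _); apply: eq_bigr => j _; by rewrite h.
Qed.

Lemma a3s_ext x y i : (forall j, x j = y j) -> a3s x i = a3s y i.
Proof.
move=> h; rewrite /a3s (a2s_ext _ _ _ h); congr (_ + _ * _); apply: eq_bigr => j _; by rewrite h.
Qed.

Lemma a2sB x y i : a2s (fun j => x j - y j) i = a2s x i - a2s y i.
Proof.
rewrite /a2s.
have -> : \sum_j dp i j * (x j - y j) = \sum_j dp i j * x j - \sum_j dp i j * y j.
  by rewrite -sumrB; apply: eq_bigr => j _; rewrite mulrBr.
ring.
Qed.

Lemma a3sB x y i : a3s (fun j => x j - y j) i = a3s x i - a3s y i.
Proof. rewrite /a3s a2sB sumrB; ring. Qed.

Lemma sum_a2s x : \sum_i a2s x i = 0.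
Proof.
rewrite /a2s sumrB; apply/eqP; rewrite subr_eq0; apply/eqP.
rewrite (eq_bigr (fun i => \sum_k dp i k * Y k * x i)); last first.
  by move=> i _; rewrite mulr_suml.
rewrite [RHS](eq_bigr (fun i => \sum_j Y i * (dp i j * x j))); last first.
  by move=> i _; rewrite mulr_sumr.
rewrite [RHS]exchange_big /=; apply: eq_bigr => i _; apply: eq_bigr => k _.
by rewrite dp_sym; ring.
Qed.

Lemma sum_a3s x : \sum_i a3s x i = gam * (\sum_i Y i) * \sum_i x i.
Proof.
rewrite /a3s big_split /= sum_a2s add0r -mulr_suml; congr (_ * _); by rewrite mulr_sumr.
Qed.

Lemma Qform u :
  2 * \sum_i u i * a2s (fun j => Y j * u j) i =
  \sum_i \sum_j dp i j * Y i * Y j * (u i - u j) ^+ 2.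
Proof.
have E1 i : u i * a2s (fun j => Y j * u j) i =
   \sum_j dp i j * Y i * Y j * (u i * (u i - u j)).
  have -> : a2s (fun j => Y j * u j) i = \sum_j dp i j * Y i * Y j * (u i - u j).
    rewrite /a2s mulr_suml [Y i * \sum_j _]mulr_sumr -sumrB; apply: eq_bigr => j _; ring.
  rewrite mulr_sumr; apply: eq_bigr => j _; ring.
rewrite (eq_bigr _ (fun i _ => E1 i)).
set T := (\sum_i \sum_j dp i j * Y i * Y j * (u i * (u i - u j))).
have E : T = \sum_i \sum_j dp i j * Y i * Y j * (u j * (u j - u i)).
  rewrite /T exchange_big /=; apply: eq_bigr => i _; apply: eq_bigr => j _.
  by rewrite dp_sym; ring.
have -> : 2 * T = T + T by ring.
rewrite {2}E -big_split /=; apply: eq_bigr => i _.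
rewrite -big_split /=; apply: eq_bigr => j _; ring.
Qed.

Lemma Qterm_ge0 u i j : 0 <= dp i j * Y i * Y j * (u i - u j) ^+ 2.
Proof.
case: (eqVneq i j) => [->|ne]; first by rewrite subrr expr0n /= mulr0.
apply: mulr_ge0; last exact: sqr_ge0.
by apply: mulr_ge0; [apply: mulr_ge0; [exact: (ltW (dp_gt0 _ _ ne))|]|]; apply: hY0.
Qed.

Lemma Qge0 u : 0 <= \sum_i u i * a2s (fun j => Y j * u j) i.
Proof.
have : 0 <= 2 * \sum_i u i * a2s (fun j => Y j * u j) i.
  by rewrite Qform; apply: sumr_ge0 => i _; apply: sumr_ge0 => j _; apply: Qterm_ge0.
by rewrite pmulr_rge0.
Qed.

Lemma Q0 u : \sum_i u i * a2s (fun j => Y j * u j) i = 0 ->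
  forall i j, 0 < Y i -> 0 < Y j -> u i = u j.
Proof.
move=> h0 i j hi hj.
have h2 := Qform u; rewrite h0 mulr0 in h2; move/esym: h2 => h2.
have hi0 : \sum_j dp i j * Y i * Y j * (u i - u j) ^+ 2 = 0.
  apply: (psumr_eq0P _ h2) => // k _; apply: sumr_ge0 => l _; exact: Qterm_ge0.
have : dp i j * Y i * Y j * (u i - u j) ^+ 2 = 0.
  apply: (psumr_eq0P _ hi0) => // k _; exact: Qterm_ge0.
case: (eqVneq i j) => [->//|ne].
have hw : dp i j * Y i * Y j != 0.
  exact: (mulf_neq0 (mulf_neq0 (lt0r_neq0 (dp_gt0 _ _ ne)) (lt0r_neq0 hi)) (lt0r_neq0 hj)).
by move/eqP; rewrite mulf_eq0 (negbTE hw) /= sqrf_eq0 subr_eq0 => /eqP.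
Qed.

Lemma Spos i : Y i = 0 -> 0 < \sum_k dp i k * Y k.
Proof.
move=> hi; case: Ypos => j0 hj0.
have ne : i != j0 by apply/eqP => e; move: hj0; rewrite -e hi ltxx.
rewrite (bigD1 j0) //=.
have h : 0 <= \sum_(k | k != j0) dp i k * Y k.
  apply: sumr_ge0 => k _; case: (eqVneq i k) => [<-|nk]; first by rewrite hi mulr0.
  by apply: mulr_ge0; [exact: (ltW (dp_gt0 _ _ nk))|apply: hY0].
have h1 : 0 < dp i j0 * Y j0 by rewrite mulr_gt0 ?dp_gt0.
by apply: (lt_le_trans h1); rewrite lerDl.
Qed.

Lemma injA2 x : (forall i, a2s x i = 0) -> \sum_i x i = 0 -> forall i, x i = 0.
Proof.
move=> ha hs.
have hz i : Y i = 0 -> x i = 0.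
  move=> hi; have := ha i; rewrite /a2s hi mul0r subr0 => /eqP.
  by rewrite mulf_eq0 gt_eqF ?Spos //= => /eqP.
pose u j := x j / Y j.
have hxu j : x j = Y j * u j.
  case: (eqVneq (Y j) 0) => [e|ne]; first by rewrite hz // e mul0r.
  by rewrite /u mulrC divfK.
have ha' i : a2s (fun j => Y j * u j) i = 0 by rewrite -(a2s_ext _ _ _ hxu).
have hQ : \sum_i u i * a2s (fun j => Y j * u j) i = 0.
  by rewrite big1 // => i _; rewrite ha' mulr0.
case: Ypos => j0 hj0.
have hc j : x j = Y j * u j0.
  case: (eqVneq (Y j) 0) => [e|ne]; first by rewrite hz // e mul0r.
  have hj : 0 < Y j by rewrite lt_def ne hY0.
  by rewrite hxu (Q0 _ hQ _ _ hj hj0).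
have : \sum_i x i = u j0 * \sum_i Y i.
  by rewrite mulr_sumr; apply: eq_bigr => j _; rewrite hc mulrC.
rewrite hs => /esym /eqP; rewrite mulf_eq0 (negbTE (lt0r_neq0 sumY_gt0)) orbF => /eqP e i.
by rewrite hc e mulr0.
Qed.

Lemma injA2' x y : (forall i, a2s x i = a2s y i) -> \sum_i x i = \sum_i y i ->
  forall i, x i = y i.
Proof.
move=> ha hs i; apply/eqP; rewrite -subr_eq0; apply/eqP.
apply: (injA2 (fun j => x j - y j)) => [k|]; first by rewrite a2sB ha subrr.
by rewrite sumrB hs subrr.
Qed.

Lemma inj3 x y : (forall i, a3s x i = a3s y i) -> forall i, x i = y i.
Proof.
move=> h.
have hs : \sum_i x i = \sum_i y i.
  have : \sum_i a3s x i = \sum_i a3s y i by apply: eq_bigr => i _.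
  rewrite !sum_a3s => /eqP; rewrite -subr_eq0 -mulrBr mulf_eq0.
  by rewrite gt_eqF ?mulr_gt0 ?gam_gt0 ?sumY_gt0 //= subr_eq0 => /eqP.
apply: injA2' => // i; have := h i; rewrite /a3s hs; apply: addIr.
Qed.


Lemma sum_delta (f : 'I_N -> R) i : \sum_j (i == j)%:R * f j = f i.
Proof.
rewrite (bigD1 i) //= eqxx mul1r big1 ?addr0 // => j nj.
by rewrite eq_sym (negbTE nj) mul0r.
Qed.

Lemma a2s_alt x i : a2s x i = (\sum_(k | k != i) dp i k * Y k) * x i
   - Y i * \sum_(j | j != i) dp i j * x j.
Proof. rewrite /a2s (bigD1 i) //= [X in _ - _ * X](bigD1 i) //=; ring. Qed.

Lemma a3s_alt x i : a3s x i = (\sum_(j | j != i) dp i j * Y j + gam * Y i) * x i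
   - Y i * \sum_(j | j != i) (dp i j - gam) * x j.
Proof.
have -> : \sum_(j | j != i) (dp i j - gam) * x j =
   \sum_(j | j != i) dp i j * x j - gam * \sum_(j | j != i) x j.
  by rewrite mulr_sumr -sumrB; apply: eq_bigr => j _; ring.
rewrite /a3s a2s_alt [\sum_j x j](bigD1 i) //=; ring.
Qed.

Lemma split2 (g : 'I_N -> R) i : 0 < Y i ->
  \sum_(j | j != i) g j = \sum_(j | (0 < Y j) && (j != i)) g j + \sum_(j | Y j == 0) g j.
Proof.
move=> hi; rewrite (bigID (fun j => 0 < Y j)) /=; congr (_ + _).
  by apply: eq_bigl => j; rewrite andbC.
apply: eq_bigl => j; case: (eqVneq (Y j) 0) => [e|ne].
  rewrite e ltxx andbT; apply/eqP => ji; move: hi; by rewrite -ji e ltxx.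
by rewrite lt_def ne hY0 andbF.
Qed.

Lemma a3s_split x i : 0 < Y i -> a3s x i =
  (\sum_(j | (0 < Y j) && (j != i)) dp i j * Y j + gam * Y i) * x i
  - Y i * \sum_(j | (0 < Y j) && (j != i)) (dp i j - gam) * x j
  - Y i * \sum_(j | Y j == 0) (dp i j - gam) * x j.
Proof.
move=> hi; rewrite a3s_alt !(split2 _ _ hi).
rewrite [\sum_(j | Y j == 0) dp i j * Y j]big1 => [|j /eqP ->]; last by rewrite mulr0.
ring.
Qed.

Lemma A3E i j : A3 M d Y i j = (i == j)%:R * (\sum_k dp i k * Y k) - Y i * (dp i j - gam).
Proof.
rewrite mxE; case: (eqVneq i j) => [<-|ne]; last by rewrite mul0r sub0r.
rewrite mul1r [\sum_k dp i k * Y k](bigD1 i) //=; ring.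
Qed.

Lemma A3row x i : \sum_j A3 M d Y i j * x j = a3s x i.
Proof.
rewrite (eq_bigr (fun j => (i == j)%:R * ((\sum_k dp i k * Y k) * x j)
     - (Y i * (dp i j * x j) - gam * Y i * x j))); last first.
  by move=> j _; rewrite A3E; ring.
rewrite sumrB sum_delta sumrB -mulr_sumr -mulr_sumr /a3s /a2s; ring.
Qed.

Lemma mulA3 m (F : 'M[R]_(N, m)) i c : (A3 M d Y *m F) i c = a3s (fun j => F j c) i.
Proof. by rewrite mxE -A3row. Qed.

Lemma A3inj m (F G : 'M[R]_(N, m)) : A3 M d Y *m F = A3 M d Y *m G -> F = G.
Proof.
move=> h; apply/matrixP => i c.
apply: (inj3 (fun j => F j c) (fun j => G j c)) => k.
by rewrite -!mulA3 h.
Qed.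

Lemma A3unit : A3 M d Y \in unitmx.
Proof.
rewrite -unitmx_tr -row_free_unit -kermx_eq0; apply/rowV0P => v /sub_kermxP hv.
have h : A3 M d Y *m v^T = A3 M d Y *m 0.
  by rewrite mulmx0 -[A3 M d Y]trmxK -trmx_mul hv trmx0.
by rewrite -[v]trmxK (A3inj _ _ _ h) trmx0.
Qed.

Lemma BmE i j : Bm M d Y i j = (i == j)%:R * ((\sum_k dp i k * Y k) * Y i) - dp i j * Y i * Y j.
Proof.
rewrite mxE; case: (eqVneq i j) => [<-|ne]; last by rewrite mul0r sub0r.
rewrite mul1r [\sum_k dp i k * Y k](bigD1 i) //= mulrDl mulr_suml.
have -> : \sum_(k | k != i) dp i k * Y i * Y k = \sum_(k | k != i) dp i k * Y k * Y i.
  by apply: eq_bigr => k _; ring.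
ring.
Qed.

Lemma Bmrow v i : \sum_j Bm M d Y i j * v j = a2s (fun j => Y j * v j) i.
Proof.
rewrite (eq_bigr (fun j => (i == j)%:R * ((\sum_k dp i k * Y k) * Y i * v j)
     - Y i * (dp i j * (Y j * v j)))); last first.
  by move=> j _; rewrite BmE; ring.
rewrite sumrB sum_delta -mulr_sumr /a2s; ring.
Qed.

Lemma Cmrow v i : \sum_j Cm M d Y i j * v j = a3s (fun j => Y j * v j) i.
Proof.
rewrite (eq_bigr (fun j => Bm M d Y i j * v j + gam * Y i * (Y j * v j))); last first.
  by move=> j _; rewrite mxE; ring.
by rewrite big_split /= Bmrow -mulr_sumr.
Qed.

Lemma mulCm m (W : 'M[R]_(N, m)) i c : (Cm M d Y *m W) i c = a3s (fun j => Y j * W j c) i.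
Proof. by rewrite mxE -Cmrow. Qed.

Lemma mulBm m (W : 'M[R]_(N, m)) i c : (Bm M d Y *m W) i c = a2s (fun j => Y j * W j c) i.
Proof. by rewrite mxE -Bmrow. Qed.

Lemma rowE1 m (F : 'M[R]_(N, m)) (P : pred 'I_N) (a : 'I_N -> R) c :
  (\sum_(j | P j) a j *: row j F) 0 c = \sum_(j | P j) a j * F j c.
Proof. by rewrite summxE; apply: eq_bigr => j _; rewrite !mxE. Qed.

Lemma rowE2 m (F : 'M[R]_(N, m)) c : (\sum_j row j F) 0 c = \sum_j F j c.
Proof. by rewrite summxE; apply: eq_bigr => j _; rewrite !mxE. Qed.

Lemma rowP0 m (u : 'rV[R]_m) : u = 0 <-> forall c, u 0 c = 0.
Proof.
split => [-> c|h]; first by rewrite mxE.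
by apply/rowP => c; rewrite h mxE.
Qed.

Lemma rowPeq m (u v : 'rV[R]_m) : u = v <-> forall c, u 0 c = v 0 c.
Proof. split => [-> //|h]; by apply/rowP => c. Qed.

Lemma S2E m (F P : 'M[R]_(N, m)) : S2 M d Y F P <->
  (forall c, \sum_i F i c = 0) /\ (forall i c, a2s (fun j => F j c) i = P i c).
Proof.
rewrite /S2 rowP0.
have E i c : ((\sum_(k | k != i) dp i k * Y k) *: row i F
            - Y i *: \sum_(j | j != i) dp i j *: row j F) 0 c = a2s (fun j => F j c) i.
  by rewrite !mxE rowE1 a2s_alt.
split => [[h1 h2]|[h1 h2]]; split.
- by move=> c; rewrite -rowE2 h1.
- by move=> i c; rewrite -E (h2 i) mxE.
- by move=> c; rewrite rowE2 h1.
- by move=> i; apply/rowPeq => c; rewrite E h2 mxE.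
Qed.

Lemma S3E m (F P : 'M[R]_(N, m)) : S3 M d Y F P <->
  (forall i c, a3s (fun j => F j c) i = P i c).
Proof.
rewrite /S3.
have E i c : ((\sum_(j | j != i) dp i j * Y j + gam * Y i) *: row i F
    - Y i *: \sum_(j | j != i) (dp i j - gam) *: row j F) 0 c = a3s (fun j => F j c) i.
  by rewrite !mxE rowE1 a3s_alt.
split => h.
- by move=> i c; rewrite -E (h i) mxE.
- by move=> i; apply/rowPeq => c; rewrite E h mxE.
Qed.

Lemma S1E m (V P : 'M[R]_(N, m)) : S1 M d Y V P <->
  (forall c, \sum_i Y i * V i c = 0) /\ (forall i c, a2s (fun j => Y j * V j c) i = P i c).
Proof.
rewrite /S1 rowP0.
split => [[h1 h2]|[h1 h2]]; split.
- by move=> c; rewrite -rowE1 h1.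
- by move=> i c; rewrite -mulBm h2.
- by move=> c; rewrite rowE1 h1.
- by apply/matrixP => i c; rewrite mulBm h2.
Qed.

Lemma KsysE m (G P : 'M[R]_(N, m)) : Ksys M d Y G P <->
  (forall i, 0 < Y i -> forall c, a3s (fun j => G j c) i = P i c).
Proof.
rewrite /Ksys.
have E i c : 0 < Y i ->
   ((\sum_(j | (0 < Y j) && (j != i)) dp i j * Y j + gam * Y i) *: row i G
    - Y i *: \sum_(j | (0 < Y j) && (j != i)) (dp i j - gam) *: row j G) 0 c
   = a3s (fun j => G j c) i + Y i * \sum_(j | Y j == 0) (dp i j - gam) * G j c.
  by move=> hi; rewrite !mxE rowE1 (a3s_split _ _ hi); ring.
have E2 i c : (row i P + Y i *: \sum_(j | Y j == 0) (dp i j - gam) *: row j G) 0 c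
   = P i c + Y i * \sum_(j | Y j == 0) (dp i j - gam) * G j c.
  by rewrite !mxE rowE1.
split => h i hi.
- by move=> c; have := congr1 (fun r : 'rV[R]_m => r 0 c) (h i hi); rewrite E // E2 => /addIr.
- by apply/rowPeq => c; rewrite E // E2 h.
Qed.

Variable n : nat.
Hypothesis hn : (1 <= n)%N.

Lemma SsumE i : Ssum M d Y i = \sum_k dp i k * Y k.
Proof.
rewrite /Ssum [RHS](bigID (fun j => 0 < Y j)) /= [X in _ = _ + X]big1 ?addr0 // => j hj.
by move: (hY0 j) hj; rewrite le_eqVlt => /orP [/eqP <- _|->//]; rewrite mulr0.
Qed.

Lemma S1uniq' m (P V W : 'M[R]_(N, m)) : S1 M d Y V P -> S1 M d Y W P ->
  forall i c, Y i * V i c = Y i * W i c.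
Proof.
move=> /S1E [v1 v2] /S1E [w1 w2] i c.
apply: (injA2' (fun j => Y j * V j c) (fun j => Y j * W j c)) => [k|].
  by rewrite v2 w2.
by rewrite v1 w1.
Qed.

Lemma gamY_neq0 : gam * \sum_i Y i != 0.
Proof. by rewrite mulf_neq0 // lt0r_neq0 // ?gam_gt0 ?sumY_gt0. Qed.

Lemma main :
  ((forall i, 0 < Y i) ->
     forall P : 'M[R]_(N, n), \sum_i row i P = 0 ->
       (exists! V, S1 M d Y V P)
       /\ (forall V, S1 M d Y V P ->
             forall F, S2 M d Y F P <-> (forall i, row i F = Y i *: row i V))
       /\ (forall V, S1 M d Y V P ->
             forall W, Cm M d Y *m W = P <-> W = V)
       /\ posdef (Cm M d Y))
  /\
  ((exists i, Y i = 0) ->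
     forall P : 'M[R]_(N, n), \sum_i row i P = 0 ->
       (forall V W, S1 M d Y V P -> S1 M d Y W P ->
          forall i, 0 < Y i -> row i V = row i W)
       /\ (forall V, S1 M d Y V P -> forall i, Y i = 0 ->
             exists W, S1 M d Y W P /\ row i W != row i V)
       /\ (exists! F, S2 M d Y F P)
       /\ (forall F, S2 M d Y F P ->
             (forall i, Y i = 0 -> row i F = (Ssum M d Y i)^-1 *: row i P)
             /\ Ksys M d Y F P
             /\ (forall G, (forall i, Y i = 0 -> row i G = row i F) ->
                   Ksys M d Y G P -> forall i, 0 < Y i -> row i G = row i F)
             /\ ((forall i, Y i = 0 -> row i P = 0) ->
                   forall i, Y i = 0 -> row i F = 0)))
  /\
  (A3 M d Y \in unitmx
   /\ (forall P : 'M[R]_(N, n), forall F, S3 M d Y F P <-> A3 M d Y *m F = P)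
   /\ (forall P : 'M[R]_(N, n), exists! F, S3 M d Y F P)
   /\ (forall P F : 'M[R]_(N, n), S3 M d Y F P ->
         (gam * \sum_i Y i) *: \sum_j row j F = \sum_j row j P)
   /\ (forall P : 'M[R]_(N, n), \sum_i row i P = 0 ->
         (forall F, S3 M d Y F P <-> S2 M d Y F P)
         /\ (exists! F, S2 M d Y F P))).
Proof.
have S3iff (P F : 'M[R]_(N, n)) : S3 M d Y F P <-> A3 M d Y *m F = P.
  rewrite S3E; split => [h|<- i c]; last by rewrite mulA3.
  by apply/matrixP => i c; rewrite mulA3 h.
have S3ex (P : 'M[R]_(N, n)) : exists! F, S3 M d Y F P.
  exists (invmx (A3 M d Y) *m P); split.
    by apply/S3iff; rewrite mulKVmx // A3unit.
  by move=> F /S3iff <-; rewrite mulKmx // A3unit.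
have S3sum (P F : 'M[R]_(N, n)) : S3 M d Y F P ->
    (gam * \sum_i Y i) *: \sum_j row j F = \sum_j row j P.
  move=> /S3E h; apply/rowPeq => c; rewrite mxE !rowE2.
  have -> : \sum_j P j c = \sum_j a3s (fun k => F k c) j by apply: eq_bigr => j _; rewrite h.
  by rewrite sum_a3s.
have S3S2 (P : 'M[R]_(N, n)) : \sum_i row i P = 0 ->
    forall F, S3 M d Y F P <-> S2 M d Y F P.
  move=> hP F; have hPc c : \sum_i P i c = 0 by rewrite -rowE2 hP mxE.
  split.
  - move=> h3; have hs := S3sum P F h3; move/S3E: h3 => h3; apply/S2E.
    have hF c : \sum_i F i c = 0.
      have := congr1 (fun r : 'rV[R]_n => r 0 c) hs; rewrite mxE !rowE2 hPc => /eqP.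
      by rewrite mulf_eq0 (negbTE gamY_neq0) /= => /eqP.
    by split => // i c; rewrite -h3 /a3s hF mulr0 addr0.
  - by move/S2E => [h1 h2]; apply/S3E => i c; rewrite /a3s h1 mulr0 addr0 h2.
have S2ex (P : 'M[R]_(N, n)) : \sum_i row i P = 0 -> exists! F, S2 M d Y F P.
  move=> hP; case: (S3ex P) => F [hF u]; exists F; split; first by apply/S3S2.
  by move=> G /(S3S2 P hP) hG; exact: u.
have S2uniq (P F G : 'M[R]_(N, n)) : S2 M d Y F P -> S2 M d Y G P -> F = G.
  move=> /S2E [f1 f2] /S2E [g1 g2]; apply/matrixP => i c.
  apply: (injA2' (fun j => F j c) (fun j => G j c)) => [k|]; first by rewrite f2 g2.
  by rewrite f1 g1.
have DV (P V : 'M[R]_(N, n)) : S1 M d Y V P -> S2 M d Y (\matrix_(j, c) (Y j * V j c)) P.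
  move=> /S1E [v1 v2]; apply/S2E; split => [c|i c].
    by rewrite (eq_bigr (fun j => Y j * V j c)) ?v1 // => j _; rewrite mxE.
  by rewrite -v2; apply: a2s_ext => j; rewrite mxE.
split; [|split].
-
  move=> hYp P hP.
  case: (S2ex P hP) => F0 [hF0 _].
  pose V0 := \matrix_(j, c) (F0 j c / Y j).
  have hYF j c : Y j * V0 j c = F0 j c by rewrite mxE mulrC divfK // lt0r_neq0.
  have hV0 : S1 M d Y V0 P.
    move/S2E: hF0 => [h1 h2]; apply/S1E; split => [c|i c].
      by rewrite (eq_bigr (fun j => F0 j c)) ?h1 // => j _; exact: hYF.
    by rewrite -h2; apply: a2s_ext => j; exact: hYF.
  split; [|split; [|split]].
  + exists V0; split => // W hW; apply/matrixP => i c.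
    apply: (mulfI (lt0r_neq0 (hYp i))); exact: S1uniq' hV0 hW i c.
  + move=> V hV F; split.
    * move=> hF; rewrite (S2uniq _ _ _ hF (DV _ _ hV)) => i.
      by apply/rowP => c; rewrite !mxE.
    * move=> h; have -> : F = \matrix_(j, c) (Y j * V j c); last exact: DV.
      apply/matrixP => i c; have := congr1 (fun r : 'rV[R]_n => r 0 c) (h i).
      by rewrite !mxE.
  + move=> V hV W; move/S1E: (hV) => [v1 v2]; split.
    * move=> hW; apply/matrixP => i c; apply: (mulfI (lt0r_neq0 (hYp i))).
      move: i; apply: (inj3 (fun j => Y j * W j c) (fun j => Y j * V j c)) => i.
      by rewrite -(mulCm _ W) hW /a3s v1 mulr0 addr0 v2.
    * by move=> ->; apply/matrixP => i c; rewrite mulCm /a3s v1 mulr0 addr0 v2.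
  + split.
    * apply/matrixP => i j; rewrite !mxE; case: (eqVneq i j) => [->//|ne].
      by rewrite dp_sym; ring.
    * move=> x hx; pose u j := x 0 j.
      have E : (x *m Cm M d Y *m x^T) 0 0 = \sum_i u i * a3s (fun j => Y j * u j) i.
        rewrite mxE (eq_bigr (fun j => \sum_i u i * Cm M d Y i j * u j)); last first.
          by move=> j _; rewrite !mxE mulr_suml.
        rewrite exchange_big /=; apply: eq_bigr => i _; rewrite -Cmrow mulr_sumr.
        by apply: eq_bigr => j _; rewrite mulrA.
      set s := \sum_j Y j * u j.
      have E2 : \sum_i u i * a3s (fun j => Y j * u j) i =
          \sum_i u i * a2s (fun j => Y j * u j) i + gam * s ^+ 2.
        rewrite /a3s -/s (eq_bigr (fun i => u i * a2s (fun j => Y j * u j) i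
                             + gam * s * (Y i * u i))); last by move=> i _; ring.
        by rewrite big_split /= -mulr_sumr -/s expr2 mulrA.
      have hg : 0 <= gam * s ^+ 2 by apply: mulr_ge0; [exact: ltW gam_gt0|exact: sqr_ge0].
      rewrite E E2 lt_def; apply/andP; split; last by apply: addr_ge0 => //; exact: Qge0.
      apply/negP; rewrite paddr_eq0 //; last exact: Qge0.
      case/andP => /eqP hQ; rewrite mulf_eq0 (negbTE (lt0r_neq0 gam_gt0)) /= sqrf_eq0 => /eqP hs.
      case: Ypos => j0 hj0.
      have hc j : u j = u j0 by apply: (Q0 _ hQ).
      have : s = u j0 * \sum_i Y i.
        by rewrite /s mulr_sumr; apply: eq_bigr => j _; rewrite hc mulrC.
      rewrite hs => /esym /eqP; rewrite mulf_eq0 (negbTE (lt0r_neq0 sumY_gt0)) orbF => /eqP e.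
      move/negP: hx; apply; apply/eqP/rowP => j; rewrite mxE.
      by rewrite -/(u j) hc e.
-
  move=> [i0 hi0] P hP.
  split; [|split; [|split]].
  + move=> V W hV hW i hi; apply/rowP => c; rewrite !mxE.
    apply: (mulfI (lt0r_neq0 hi)); exact: S1uniq' hV hW i c.
  + move=> V hV i hi; pose c0 : 'I_n := Ordinal hn.
    exists (V + \matrix_(j, c) ((j == i)%:R : R)); split.
    * move/S1E: hV => [v1 v2]; apply/S1E.
      have hW j c : Y j * (V + \matrix_(j, c) ((j == i)%:R : R)) j c = Y j * V j c.
        rewrite !mxE; case: (eqVneq j i) => [->|ne]; first by rewrite hi !mul0r.
        by rewrite addr0.
      split => [c|k c].
        by rewrite (eq_bigr (fun j => Y j * V j c)) ?v1 // => j _; exact: hW.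
      by rewrite -v2; apply: a2s_ext => j; exact: hW.
    * apply/negP => /eqP h; have := congr1 (fun r : 'rV[R]_n => r 0 c0) h.
      rewrite !mxE eqxx => /eqP; rewrite -subr_eq0 addrC addrK oner_eq0.
      by [].
  + exact: S2ex.
  + move=> F hF; move/S2E: (hF) => [f1 f2].
    have hZ i : Y i = 0 -> forall c, F i c = (Ssum M d Y i)^-1 * P i c.
      move=> hi c; have := f2 i c; rewrite /a2s hi mul0r subr0 SsumE => <-.
      by rewrite mulrA mulVf ?mul1r // lt0r_neq0 // Spos.
    split; [|split; [|split]].
    * by move=> i hi; apply/rowP => c; rewrite !mxE hZ.
    * by apply/KsysE => i hi c; rewrite /a3s f1 mulr0 addr0 f2.
    * move=> G hG /KsysE hK i hi; apply/rowP => c; rewrite !mxE.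
      move: i hi; suff: forall j, G j c = F j c by move=> h i _; exact: h.
      apply: inj3 => j; case: (eqVneq (Y j) 0) => [e|ne].
        have := congr1 (fun r : 'rV[R]_n => r 0 c) (hG j e); rewrite !mxE => hGF.
        by rewrite /a3s /a2s e !mul0r !subr0 !mulr0 !mul0r !addr0 hGF.
      have hj : 0 < Y j by rewrite lt_def ne hY0.
      by rewrite hK // /a3s f1 mulr0 addr0 f2.
    * move=> hPz i hi; apply/rowP => c; rewrite !mxE hZ //.
      have := congr1 (fun r : 'rV[R]_n => r 0 c) (hPz i hi); rewrite !mxE => ->.
      by rewrite mulr0.
-
  split; first exact: A3unit.
  split; first exact: S3iff.
  split; first exact: S3ex.
  split; first exact: S3sum.
  by move=> P hP; split; [exact: S3S2|exact: S2ex].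
Qed.

End Main.

Theorem theorem3p1 (R : realFieldType) (N n : nat)
  (M : 'I_N -> R) (d : 'I_N -> 'I_N -> R)
  (hN : (2 <= N)%N) (hn : (1 <= n)%N)
  (hM : forall i, 0 < M i)
  (hdsym : forall i j, i != j -> d i j = d j i)
  (hdpos : forall i j, i != j -> 0 < d i j)
  (Y : 'I_N -> R) (hY0 : forall i, 0 <= Y i) (hYnz : exists i, Y i != 0) :
  (* (i) all Y_i > 0 *)
  ((forall i, 0 < Y i) ->
     forall P : 'M[R]_(N, n), \sum_i row i P = 0 ->
       (exists! V, S1 M d Y V P)
       /\ (forall V, S1 M d Y V P ->
             forall F, S2 M d Y F P <-> (forall i, row i F = Y i *: row i V))
       /\ (forall V, S1 M d Y V P ->
             forall W, Cm M d Y *m W = P <-> W = V)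
       /\ posdef (Cm M d Y))
  /\
  (* (ii) some (but not all) Y_i vanish *)
  ((exists i, Y i = 0) ->
     forall P : 'M[R]_(N, n), \sum_i row i P = 0 ->
       (forall V W, S1 M d Y V P -> S1 M d Y W P ->
          forall i, 0 < Y i -> row i V = row i W)
       /\ (forall V, S1 M d Y V P -> forall i, Y i = 0 ->
             exists W, S1 M d Y W P /\ row i W != row i V)
       /\ (exists! F, S2 M d Y F P)
       /\ (forall F, S2 M d Y F P ->
             (forall i, Y i = 0 -> row i F = (Ssum M d Y i)^-1 *: row i P)
             /\ Ksys M d Y F P
             /\ (forall G, (forall i, Y i = 0 -> row i G = row i F) ->
                   Ksys M d Y G P -> forall i, 0 < Y i -> row i G = row i F)
             /\ ((forall i, Y i = 0 -> row i P = 0) ->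
                   forall i, Y i = 0 -> row i F = 0)))
  /\
  (* (iii) all cases *)
  (A3 M d Y \in unitmx
   /\ (forall P : 'M[R]_(N, n), forall F, S3 M d Y F P <-> A3 M d Y *m F = P)
   /\ (forall P : 'M[R]_(N, n), exists! F, S3 M d Y F P)
   /\ (forall P F : 'M[R]_(N, n), S3 M d Y F P ->
         (gam M d * \sum_i Y i) *: \sum_j row j F = \sum_j row j P)
   /\ (forall P : 'M[R]_(N, n), \sum_i row i P = 0 ->
         (forall F, S3 M d Y F P <-> S2 M d Y F P)
         /\ (exists! F, S2 M d Y F P))).
Proof.
by apply: main.
Qed.
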